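(* Consider an instance of UBM2SP with harmonious order $\mathcal{L}$, and let $\{\pi_1,\pi_2\}$ be a solution in which both manipulators place $p$ in their highest position. Let $c\in\mathcal{C}$ with $\pi_1(c)=x$ and $\pi_2(c)=y$. Suppose there are integers $x',y'$ such that (1) $x'>x$ and $y'>y$; (2) $SC_{\mathcal{V}}(c)+x'+y'-2<SC_{\mathcal{V}}(p)+2|\mathcal{C}|$; (3) $\mathcal{C}_{\pi_1}(x+1,x')\subseteq\mathcal{C}(\mathcal{L},-c)$ and $\mathcal{C}_{\pi_2}(y+1,y')\subseteq\mathcal{C}(\mathcal{L},-c)$. Define $\pi_1'$ by $\pi_1'(c')=\pi_1(c')$ if $\pi_1(c')>x'$ or $\pi_1(c')<x$; $\pi_1'(c)=x'$; and $\pi_1'(c')=j$ if $x<\pi_1(c')=j+1\le x'$. Define $\pi_2'$ analogously: $\pi_2'(c')=\pi_2(c')$ if $\pi_2(c')>y'$ or $\pi_2(c')<y$; $\pi_2'(c)=y'$; and $\pi_2'(c')=j$ if $y<\pi_2(c')=j+1\le y'$. Then $\{\pi_1',\pi_2'\}$ is also a solution.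
   Context: Borda elections: candidates $\mathcal{C}\cup\{p\}$ ($p\notin\mathcal{C}$); each vote is a bijection $\pi:\mathcal{C}\cup\{p\}\to\{1,\dots,|\mathcal{C}|+1\}$, giving candidate $c$ score $\pi(c)-1$; $SC_{\mathcal{V}}(c)$ denotes the total score of $c$ from the non-manipulator votes $\Pi_{\mathcal{V}}$. $p$ wins iff its total score is strictly higher than that of every other candidate. A vote $\pi$ is coincident with a bijection $\mathcal{L}:\mathcal{C}\cup\{p\}\to\{1,\dots,|\mathcal{C}|+1\}$ if for any three distinct candidates $a,b,c$ with $\mathcal{L}(a)<\mathcal{L}(b)<\mathcal{L}(c)$ or $\mathcal{L}(c)<\mathcal{L}(b)<\mathcal{L}(a)$, $\pi(c)>\pi(b)$ implies $\pi(b)>\pi(a)$. UBM2SP: given candidates $\mathcal{C}\cup\{p\}$, votes $\Pi_{\mathcal{V}}$ all coincident with a given bijection $\mathcal{L}$ (harmonious order), with $p$ not the winner, and two manipulators; a solution is a pair of votes $\{\pi_1,\pi_2\}$, both coincident with $\mathcal{L}$, such that $p$ has strictly higher total score than every candidate of $\mathcal{C}$ with respect to $\Pi_{\mathcal{V}}\uplus\{\pi_1,\pi_2\}$. Notation: $\mathcal{C}_L=\{c\in\mathcal{C}:\mathcal{L}(c)<\mathcal{L}(p)\}$, $\mathcal{C}_R=\{c\in\mathcal{C}:\mathcal{L}(c)>\mathcal{L}(p)\}$; for $c\in\mathcal{C}$, $\mathcal{C}(\mathcal{L},-c)=\mathcal{C}_L$ if $c\in\mathcal{C}_R$ and $=\mathcal{C}_R$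 if $c\in\mathcal{C}_L$. For a vote $\pi$ and integers $x\le x'$, $\mathcal{C}_\pi(x,x')=\{c\in\mathcal{C}\cup\{p\}: x\le\pi(c)\le x'\}$. *)

(* Defs.v *)
From mathcomp Require Import all_boot.
Set Implicit Arguments. Unset Strict Implicit. Unset Printing Implicit Defensive.

Section Borda.
Variable T : finType. (* the candidate set C ∪ {p}; #|T| = |C| + 1 *)

(* A vote: a bijection T -> {1, ..., #|T|} (injective into that range, hence bijective). *)
Definition is_vote (pi : T -> nat) : Prop :=
  injective pi /\ (forall d, 1 <= pi d <= #|T|).

Definition coincident (pi L : T -> nat) : Prop :=
  forall a b d : T, a != b -> b != d -> a != d ->
    (L a < L b < L d) || (L d < L b < L a) ->
    pi d > pi b -> pi b > pi a.

(* Borda score of d from the non-manipulator votes V (a multiset of n votes) *)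
Definition score (n : nat) (V : 'I_n -> T -> nat) (d : T) : nat :=
  \sum_(i < n) (V i d - 1).

Definition total_score n (V : 'I_n -> T -> nat) (pi1 pi2 : T -> nat) (d : T) : nat :=
  score V d + (pi1 d - 1) + (pi2 d - 1).

Definition p_wins_V n (V : 'I_n -> T -> nat) (p : T) : Prop :=
  forall d, d != p -> score V d < score V p.

Definition is_solution (L : T -> nat) (p : T) n (V : 'I_n -> T -> nat)
    (pi1 pi2 : T -> nat) : Prop :=
  [/\ is_vote pi1, coincident pi1 L, is_vote pi2, coincident pi2 L &
      forall d, d != p -> total_score V pi1 pi2 d < total_score V pi1 pi2 p].

Definition C_L_minus (L : T -> nat) (p c d : T) : bool :=
  if L p < L c then L d < L p else L p < L d.

Definition C_pi (pi : T -> nat) (lo hi : nat) (d : T) : bool := lo <= pi d <= hi.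

Definition shift_vote (pi : T -> nat) (c : T) (x x' : nat) (d : T) : nat :=
  if d == c then x' else if x < pi d <= x' then (pi d).-1 else pi d.

End Borda.

(* Main.v *)
Require Import Defs.
Set Warnings "-notation-overridden".
From mathcomp Require Import all_boot zify.
Set Implicit Arguments. Unset Strict Implicit. Unset Printing Implicit Defensive.

Section S.
Variable T : finType.
Variables (L pi : T -> nat) (p c : T) (x x' : nat).
Hypotheses (Linj : injective L) (piv : is_vote pi) (pico : coincident pi L)
  (pip : pi p = #|T|) (cp : c != p) (pic : pi c = x) (xx : x < x')
  (S3 : forall d, C_pi pi x.+1 x' d -> C_L_minus L p c d).

Let sv := shift_vote pi c x x'.

Lemma svc : sv c = x'.
Proof. by rewrite /sv /shift_vote eqxx. Qed.

Lemma sv_ne d : d != c -> sv d = if (x < pi d) && (pi d <= x') then (pi d).-1 else pi d.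
Proof. by move=> H; rewrite /sv /shift_vote (negbTE H). Qed.

Lemma pinj : injective pi. Proof. by case: piv. Qed.
Lemma pib d : 1 <= pi d <= #|T|. Proof. by case: piv. Qed.

Lemma pi_ne d e : d != e -> pi d != pi e.
Proof. by move=> H; apply/eqP => /pinj E; rewrite E eqxx in H. Qed.

Lemma notS_p : ~~ C_L_minus L p c p.
Proof. by rewrite /C_L_minus ltnn; case: ifP. Qed.

Lemma x'lt : x' < #|T|.
Proof.
rewrite ltnNge; apply/negP => H.
have := pi_ne cp; rewrite pic pip => hx.
have := pib c; rewrite pic => hb.
have : C_pi pi x.+1 x' p by rewrite /C_pi pip; apply/andP; split; lia.
by move/S3; rewrite (negbTE notS_p).
Qed.

Lemma svp : sv p = pi p.
Proof. rewrite sv_ne 1?eq_sym //. have := x'lt. rewrite pip. case: ifP => //; lia. Qed.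

Lemma sv_le d : d != c -> sv d <= pi d.
Proof. move=> H; rewrite sv_ne //; case: ifP => //; lia. Qed.

Lemma sv_lt e f : e != c -> f != c -> sv e < sv f -> pi e < pi f.
Proof. move=> He Hf; rewrite !sv_ne //; do 2 case: ifP; lia. Qed.

Lemma sv_ltc e : e != c -> sv e < sv c -> pi e < pi c \/ C_pi pi x.+1 x' e.
Proof.
move=> He; rewrite svc sv_ne // /C_pi; have := pi_ne He; rewrite pic => hne.
case: ifP => [/andP[h1 h2] _|]; first by right; move: h1 h2; rewrite /C_pi; lia.
move=> h h2; left; lia.
Qed.

Lemma sv_cgt e : e != c -> sv c < sv e -> pi c < pi e.
Proof. move=> He; rewrite svc sv_ne // pic; case: ifP; lia. Qed.

Lemma sv_inj : injective sv.
Proof.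
move=> d1 d2.
case: (eqVneq d1 c) => [->|H1]; case: (eqVneq d2 c) => [->|H2] //.
- rewrite svc sv_ne //; case: ifP; lia.
- rewrite svc sv_ne //; case: ifP; lia.
- rewrite !sv_ne //; have := pi_ne H1; have := pi_ne H2; rewrite pic => h2 h1.
  do 2 case: ifP; move=> a b E; apply: pinj; lia.
Qed.

Lemma sv_vote : is_vote sv.
Proof.
split; first exact: sv_inj.
move=> d; case: (eqVneq d c) => [->|H]; first by rewrite svc; have := x'lt; lia.
rewrite sv_ne //; have := pib d; have := pib c; rewrite pic; case: ifP; lia.
Qed.

Lemma sv_coinc : coincident sv L.
Proof.
move=> a b d ab bd ad hL hdb; rewrite ltnNge; apply/negP => hba.
have hba' : sv b < sv a.
  by rewrite ltn_neqAle hba andbT; apply/eqP => /sv_inj E; rewrite E eqxx in ab.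
have key : forall a d, a != b -> b != d -> a != d ->
   (L a < L b < L d) || (L d < L b < L a) -> pi b < pi a -> pi b < pi d -> False.
  move=> a0 d0 h1 h2 h3 h4 h5 h6.
  by have := pico h1 h2 h3 h4 h6; rewrite ltnNge ltnW.
have topS : forall a d, a != b -> b != d -> a != d ->
   (L a < L b < L d) || (L d < L b < L a) -> C_L_minus L p a b -> pi b < pi d -> False.
  move=> a0 d0 h1 h2 h3 h4 h5 h6.
  have bp : b != p by apply/eqP => E; move: h5; rewrite E /C_L_minus ltnn; case: ifP.
  have pb : pi b < pi p by have := pi_ne bp; have := pib b; rewrite pip; lia.
  move: h5; rewrite /C_L_minus => h5.
  have hp : (L d0 < L b < L p) || (L p < L b < L d0).
    by case: ifP h5; move=> h7 h5; lia.
  have d0p : d0 != p by apply/eqP => E; rewrite E in hp; lia.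
  have := pico (a:=d0) (b:=b) (d:=p); rewrite eq_sym h2 bp d0p hp pb => /(_ isT isT isT isT isT).
  by rewrite ltnNge ltnW.
have hLs : (L d < L b < L a) || (L a < L b < L d) by rewrite orbC.
case: (eqVneq b c) => [Eb|Hb].
  have Eb' := Eb; rewrite Eb in ab bd hba' hdb.
  have h1 : pi c < pi a by apply: sv_cgt hba'.
  have h2 : pi c < pi d by apply: sv_cgt hdb; rewrite eq_sym.
  by apply: (key a d) => //; rewrite ?Eb' // eq_sym Eb'.
case: (eqVneq a c) => [Ea|Ha].
  rewrite Ea in ab ad hL hba'; have Hd : d != c by rewrite eq_sym.
  have hbd := sv_lt Hb Hd hdb.
  case: (sv_ltc Hb hba') => h; first exact: (key c d).
  exact: (topS c d _ _ _ _ (S3 h)).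
case: (eqVneq d c) => [Ed|Hd].
  rewrite Ed in bd ad hLs hdb; have hba2 := sv_lt Hb Ha hba'.
  case: (sv_ltc Hb hdb) => h; first by apply: (key c a) => //; rewrite eq_sym.
  by apply: (topS c a _ _ _ _ (S3 h)) => //; rewrite eq_sym.
exact: (key a d _ _ _ _ (sv_lt Hb Ha hba') (sv_lt Hb Hd hdb)).
Qed.

Lemma shift_all : [/\ is_vote sv, coincident sv L, sv c = x', sv p = pi p &
  forall d, d != c -> sv d <= pi d].
Proof. split; [exact: sv_vote | exact: sv_coinc | exact: svc | exact: svp | exact: sv_le]. Qed.
End S.

Unset Implicit Arguments.
Theorem mainTheorem7 (T : finType) (p : T) (L : T -> nat) (n : nat)
    (V : 'I_n -> T -> nat) (pi1 pi2 : T -> nat) (c : T) (x y x' y' : nat) :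
  is_vote L ->
  (forall i, is_vote (V i) /\ coincident (V i) L) ->
  ~ p_wins_V V p ->
  is_solution L p V pi1 pi2 ->
  pi1 p = #|T| -> pi2 p = #|T| ->
  c != p -> pi1 c = x -> pi2 c = y ->
  x < x' -> y < y' ->
  score V c + x' + y' - 2 < score V p + 2 * (#|T| - 1) ->
  (forall d, C_pi pi1 x.+1 x' d -> C_L_minus L p c d) ->
  (forall d, C_pi pi2 y.+1 y' d -> C_L_minus L p c d) ->
  is_solution L p V (shift_vote pi1 c x x') (shift_vote pi2 c y y').
Proof.
move=> _ _ _ [v1 c1 v2 c2 hs] p1 p2 cp e1 e2 xx yy hsc S1 S2.
have [w1 d1 q1 r1 l1] := shift_all v1 c1 p1 cp e1 xx S1.
have [w2 d2 q2 r2 l2] := shift_all v2 c2 p2 cp e2 yy S2.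
split => // d dp; rewrite /total_score r1 r2 p1 p2.
case: (eqVneq d c) => [->|dc].
  rewrite q1 q2; lia.
have := hs d dp; rewrite /total_score p1 p2.
have := l1 d dc; have := l2 d dc; lia.
Qed.
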